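(* Let $X$ be a distance-regular graph of diameter $d\geq 2$, degree $k$ and $\mu=c_2$. Then every pair of distinct vertices $u,v$ of $X$ is distinguished by at least $k-\mu$ vertices, i.e. there are at least $k-\mu$ vertices $x$ with $\mathrm{dist}(x,u)\neq\mathrm{dist}(x,v)$.
   Context: A connected graph $X$ of diameter $d$ is distance-regular if there are integers $a_i,b_i,c_i$ ($0\le i\le d$) such that for all vertices $v,w$ with $\mathrm{dist}(v,w)=i$, $w$ has exactly $c_i$ neighbours at distance $i-1$, $a_i$ at distance $i$, $b_i$ at distance $i+1$ from $v$; $X$ is $k$-regular with $k=b_0$, and $\mu=c_2$ is the number of common neighbours of two vertices at distance 2. *)

(* Defs.v *)
From mathcomp Require Import all_boot.
Set Implicit Arguments. Unset Strict Implicit. Unset Printing Implicit Defensive.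

Definition simple_graph (T : finType) (e : rel T) : Prop :=
  symmetric e /\ irreflexive e.

Fixpoint reach (T : finType) (e : rel T) (n : nat) (x y : T) : bool :=
  match n with
  | 0 => x == y
  | n'.+1 => reach e n' x y || [exists z, reach e n' x z && e z y]
  end.

Definition connected_graph (T : finType) (e : rel T) : Prop :=
  forall x y : T, connect e x y.

(* graph distance: least n with reach e n x y (searched up to #|T|, which
   suffices in a connected graph: every distance is < #|T|). *)
Definition gdist (T : finType) (e : rel T) (x y : T) : nat :=
  find (fun n => reach e n x y) (iota 0 #|T|).

Definition distance_regular (T : finType) (e : rel T) (d : nat)
    (a b c : nat -> nat) : Prop :=
  [/\ simple_graph e, connected_graph e,
      (forall x y, gdist e x y <= d), (exists x y, gdist e x y = d) &
      forall (i : nat) (v w : T), i <= d -> gdist e v w = i ->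
        [/\ #|[set x | e w x & gdist e v x == i.-1]| = (if i is 0 then 0 else c i),
            #|[set x | e w x & gdist e v x == i]| = a i &
            #|[set x | e w x & gdist e v x == i.+1]| = b i]].

(* Main.v *)
Require Import Defs.
From mathcomp Require Import all_boot.
From mathcomp Require Import zify.

Section Aux.
Variables (T : finType) (e : rel T).

Lemma reach_mono m n x y : m <= n -> reach e m x y -> reach e n x y.
Proof.
elim: n => [|n IH]; first by rewrite leqn0 => /eqP->.
rewrite leq_eqVlt => /orP[/eqP-> //|]; rewrite ltnS => Hm R.
by rewrite /= (IH Hm R).
Qed.

Lemma gdist_le n x y : reach e n x y -> gdist e x y <= n.
Proof.
rewrite /gdist; case: (ltnP n #|T|) => Hn H.
  rewrite leqNgt; apply/negP => Hlt.
  by have := before_find 0 Hlt; rewrite nth_iota // add0n H.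
by apply: leq_trans (find_size _ _) _; rewrite size_iota.
Qed.

Lemma gdist_reach x y : gdist e x y < #|T| -> reach e (gdist e x y) x y.
Proof.
rewrite /gdist => H.
have Hh : has (fun n => reach e n x y) (iota 0 #|T|) by rewrite has_find size_iota.
by have := nth_find 0 Hh; rewrite nth_iota ?add0n.
Qed.

Lemma gdist_not x y n : n < gdist e x y -> ~~ reach e n x y.
Proof.
move=> H; have Hs : gdist e x y <= #|T|.
  by rewrite /gdist; apply: leq_trans (find_size _ _) _; rewrite size_iota.
by have := before_find 0 H; rewrite nth_iota ?add0n => [->|]; last lia.
Qed.

Lemma gdist0 x y : (gdist e x y == 0) = (x == y).
Proof.
apply/idP/idP.
  move/eqP=> H; have : reach e 0 x y.
    rewrite -H; apply gdist_reach; rewrite H; by apply/card_gt0P; exists x.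
  by [].
by move/eqP=>->; rewrite -leqn0; apply gdist_le => /=.
Qed.

Lemma gdist1 (irr : irreflexive e) x y : (gdist e x y == 1) = e x y.
Proof.
case: (x =P y) => [->|nxy].
  by rewrite irr; have := gdist0 y y; rewrite eqxx; move/eqP->.
have H2 : 1 < #|T| by apply/card_gt1P; exists x, y; split => //; apply/eqP.
apply/idP/idP.
  move/eqP=> H; have := gdist_reach x y; rewrite H => /(_ H2) /=.
  case/orP => [/eqP //|/existsP [z /andP[/eqP <- //]]].
move=> exy; rewrite eqn_leq gdist_le /=; last first.
  by apply/orP; right; apply/existsP; exists x; rewrite eqxx.
by rewrite lt0n gdist0; apply/eqP.
Qed.

Lemma gdist_pred n x y : gdist e x y = n.+1 -> n.+1 < #|T| ->
  exists z, gdist e x z = n /\ e z y.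
Proof.
move=> H Hn.
have R := gdist_reach x y; rewrite H in R; have {}R := R Hn.
have NR := gdist_not x y n; rewrite H ltnSn in NR.
have {}NR := NR isT.
move: R => /=; rewrite (negbTE NR) /= => /existsP [z /andP[Rz Ez]].
exists z; split=>//; apply/eqP; rewrite eqn_leq gdist_le //=.
rewrite leqNgt; apply/negP=> Hlt.
have Rz' : reach e (gdist e x z) x z by apply gdist_reach; lia.
have : reach e n x y.
  apply reach_mono with (gdist e x z).+1 => //.
  by rewrite /=; apply/orP; right; apply/existsP; exists z; rewrite Rz' Ez.
by rewrite (negbTE NR).
Qed.

Lemma path_reach x p : path e x p -> reach e (size p) x (last x p).
Proof.
elim/last_ind: p => [|p z IH] /=; first by rewrite eqxx.
rewrite rcons_path size_rcons last_rcons => /andP[Hp He] /=.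
by apply/orP; right; apply/existsP; exists (last x p); rewrite IH.
Qed.

Lemma gdist_lt (conn : connected_graph e) x y : gdist e x y < #|T|.
Proof.
have /connectP[p Hp Hl] := conn x y.
rewrite Hl; case: (shortenP Hp) => p' Hp' Hu _.
have := gdist_le _ _ _ (path_reach _ _ Hp').
have := max_card (mem (x :: p')); rewrite (card_uniqP Hu) /=; lia.
Qed.

Lemma gdist_down (conn : connected_graph e) x n : forall y, gdist e x y = n ->
  forall m, m <= n -> exists z, gdist e x z = m.
Proof.
elim: n => [|n IH] y Hy m Hm.
  by move: Hm; rewrite leqn0 => /eqP->; exists y.
move: Hm; rewrite leq_eqVlt => /orP[/eqP->|]; first by exists y.
rewrite ltnS => Hm.
have Hlt : n.+1 < #|T| by rewrite -Hy; apply gdist_lt.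
have [z [Hz _]] := gdist_pred _ _ _ Hy Hlt.
exact: IH Hz m Hm.
Qed.

Lemma card_split (P Q : pred T) :
  #|[set x | P x]| = #|[set x | P x && Q x]| + #|[set x | P x && ~~ Q x]|.
Proof.
rewrite -(cardsID [set x | Q x] [set x | P x]); congr (_ + _); apply: eq_card => x;
by rewrite !inE // andbC.
Qed.

End Aux.

Theorem lemma4p2 (T : finType) (e : rel T) (d : nat) (a b c : nat -> nat) :
  distance_regular e d a b c -> 2 <= d ->
  forall u v : T, u != v ->
    b 0 - c 2 <= #|[set x | gdist e x u != gdist e x v]|.
Proof.
move=> [[sym irr] conn Hle [x0 [y0 Hd]] DR] Hd2 u v Huv.
set D := [set x | _ ].
have G1 := gdist1 _ _ irr.
have Gs : forall z, gdist e z z = 0 by move=> z; apply/eqP; rewrite (gdist0 _ e).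
have Nk : forall z, #|[set x | e z x]| = b 0.
  move=> z; have [_ _ H] := DR 0 z z (leq0n d) (Gs z).
  by rewrite -H; apply: eq_card => x; rewrite !inE G1 andbb.
case Euv: (e u v).
-
  have Duv : gdist e u v = 1 by apply/eqP; rewrite G1.
  have [_ Ha1 Hb1] := DR 1 u v (leq_trans (isT : 1 <= 2) Hd2) Duv.
  have b1pos : 0 < b 1.
    have [z2 Hz2] := gdist_down _ _ conn _ _ _ Hd _ Hd2.
    have Hl2 : 2 < #|T| by rewrite -Hz2; apply gdist_lt.
    have [z1 [Hz1 E12]] := gdist_pred _ _ _ _ _ Hz2 Hl2.
    have [_ _ H] := DR 1 x0 z1 (leq_trans (isT : 1 <= 2) Hd2) Hz1.
    rewrite -H; apply/card_gt0P; exists z2; by rewrite inE E12 Hz2 eqxx.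
  have /card_gt0P [w] : 0 < #|[set x | e v x & gdist e u x == 2]| by rewrite Hb1.
  rewrite inE => /andP[evw duw].
  have nuw : ~~ e u w by rewrite -G1 (eqP duw).
  have [Hmu _ _] := DR 2 u w Hd2 (eqP duw).
  have Dwv : gdist e w v = 1 by apply/eqP; rewrite G1 sym.
  have [_ Ha1' _] := DR 1 w v (leq_trans (isT : 1 <= 2) Hd2) Dwv.
  have Cuw : #|[set x | e u x && e w x]| = c 2.
    by rewrite -Hmu; apply: eq_card => x; rewrite !inE G1 andbC.
  have Cuv : #|[set x | e u x && e v x]| = a 1.
    by rewrite -Ha1; apply: eq_card => x; rewrite !inE G1 andbC.
  have Cvu : #|[set x | e v x && e u x]| = a 1.
    by rewrite -Ha1; apply: eq_card => x; rewrite !inE G1.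
  have Cvw : #|[set x | e v x && e w x]| = a 1.
    by rewrite -Ha1'; apply: eq_card => x; rewrite !inE G1.
  have S1 := card_split _ (e u) (e v).
  have S2 := card_split _ (e v) (e u).
  have S3 := card_split _ (e v) (e w).
  rewrite !Nk in S1 S2 S3.
  set A1 := [set x | e u x && ~~ e v x] in S1.
  set A2 := [set x | e v x && ~~ e u x] in S2.
  set A3 := [set x | e v x && ~~ e w x] in S3.
  have sub1 : [set x | e u x && e v x] \subset
              [set x | e u x && e w x] :|: (A3 :\ w).
    apply/subsetP => x; rewrite !inE => /andP[h1 h2].
    case ewx: (e w x); rewrite ?andbT ?h1 ?h2 //=.
    rewrite andbT; apply/eqP => xw; move: nuw; by rewrite -xw h1.
  have w3 : w \in A3 by rewrite !inE evw irr.
  have := cardsD1 w A3; rewrite w3 => E3.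
  have := subset_leq_card sub1; rewrite cardsU.
  move=> ineq1.
  have sub2 : A1 :|: A2 \subset D.
    apply/subsetP => x; rewrite !inE => /orP[/andP[h1 h2]|/andP[h1 h2]].
      have -> : gdist e x u = 1 by apply/eqP; rewrite G1 sym.
      by rewrite eq_sym G1 sym.
    have -> : gdist e x v = 1 by apply/eqP; rewrite G1 sym.
    by rewrite G1 sym.
  have I12 : A1 :&: A2 = set0.
    apply/setP => x; rewrite !inE.
    by case: (e u x); case: (e v x).
  have := subset_leq_card sub2; rewrite cardsU I12 cards0.
  move=> ineq2.
  have := leq_card_setU; lia.
-
  set i := gdist e u v.
  have i0 : i != 0 by rewrite /i (gdist0 _ e).
  have i1 : i != 1 by rewrite /i G1 Euv.
  have sub : [set x | e u x && ~~ e v x] \subset D.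
    apply/subsetP => x; rewrite !inE => /andP[h1 h2].
    have -> : gdist e x u = 1 by apply/eqP; rewrite G1 sym.
    by rewrite eq_sym G1 sym.
  have inter : #|[set x | e u x && e v x]| <= c 2.
    case i2 : (i == 2).
      have [H _ _] := DR 2 u v Hd2 (eqP i2).
      by rewrite -H; apply/eq_leq/eq_card => x; rewrite !inE G1 andbC.
    rewrite (_ : [set x | e u x && e v x] = set0) ?cards0 //.
    apply/setP => x; rewrite !inE; apply/negbTE/negP => /andP[h1 h2].
    have : gdist e u v <= 2.
      apply gdist_le => /=; apply/orP; right; apply/existsP; exists x.
      rewrite (sym x v) h2 andbT; apply/orP; right; apply/existsP; exists u.
      by rewrite eqxx h1.
    move: i0 i1 i2; rewrite -/i; lia.
  have S1 := card_split _ (e u) (e v).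
  rewrite Nk in S1.
  have := subset_leq_card sub; lia.
Qed.
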